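(* For any $n\in\mathbb{N}$ with $n\geq2$, the monoid $\mathrm{rps}_n$ is not finitely presented.
   Context: Let $\mathcal{A}_n=\{1<2<\cdots<n\}$. An rPS tableau is a finite (possibly empty) sequence of nonempty bottom-justified columns of boxes filled with positive integers, such that the entries of each column are weakly decreasing from top to bottom and the bottom entries of the columns form a strictly increasing sequence from left to right. Right insertion of a symbol $a$ into an rPS tableau $B$: if $a$ is strictly greater than every entry of the bottom row, append a new column consisting of $a$ at the right end; otherwise, let $z$ be the leftmost bottom-row entry with $z\geq a$ and put $a$ in a new box at the bottom of the column of $z$ (the previous entries of that column move up one box). For $w=w_1\cdots w_k$, $\mathfrak{R}_r(w)$ is obtained by starting with the empty tableau and right-inserting $w_1,\dots,w_k$ in order. The monoid $\mathrm{rps}_n$ is the quotient of the free monoid $\mathcal{A}_n^*$ by the congruence $u\equiv v\iff\mathfrak{R}_r(u)=\mathfrak{R}_r(v)$. *)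

(* Defs.v *)
From mathcomp Require Import all_boot.
Set Implicit Arguments. Unset Strict Implicit. Unset Printing Implicit Defensive.

(* The alphabet A_n = {1 < ... < n} is represented by 'I_n (values 0..n-1,
   with the order inherited from nat; an order isomorphism). *)

(* An rPS tableau: a list of columns, left to right.  Each column is stored
   bottom-first: [:: bottom; ...; top]. *)
Definition rps_tableau := seq (seq nat).

Fixpoint rps_rinsert (a : nat) (B : rps_tableau) : rps_tableau :=
  match B with
  | [::] => [:: [:: a]]
  | c :: B' => if a <= head a c then (a :: c) :: B' else c :: rps_rinsert a B'
  end.

Definition rps_Rr (w : seq nat) : rps_tableau :=
  foldl (fun B a => rps_rinsert a B) [::] w.

Definition rps_equiv (n : nat) (u v : seq 'I_n) : Prop :=
  rps_Rr (map val u) = rps_Rr (map val v).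

Inductive cong_gen (B : eqType) (R : seq (seq B * seq B)) : seq B -> seq B -> Prop :=
  | cg_base : forall p q l r, (l, r) \in R -> cong_gen R (p ++ l ++ q) (p ++ r ++ q)
  | cg_refl : forall u, cong_gen R u u
  | cg_sym : forall u v, cong_gen R u v -> cong_gen R v u
  | cg_trans : forall u v w, cong_gen R u v -> cong_gen R v w -> cong_gen R u w.

Definition word_hom (B : Type) (n : nat) (f : B -> seq 'I_n) (u : seq B) : seq 'I_n :=
  flatten (map f u).

Definition rps_finitely_presented (n : nat) : Prop :=
  exists (B : finType) (f : B -> seq 'I_n) (R : seq (seq B * seq B)),
    (forall w : seq 'I_n, exists u : seq B, rps_equiv w (word_hom f u)) /\
    (forall u v : seq B, cong_gen R u v <-> rps_equiv (word_hom f u) (word_hom f v)).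

(* Main.v *)
Require Import Defs.
From mathcomp Require Import all_boot zify.
Set Implicit Arguments. Unset Strict Implicit.

Definition ins (B : rps_tableau) (a : nat) := rps_rinsert a B.

Lemma perm_rinsert a B : perm_eq (flatten (rps_rinsert a B)) (a :: flatten B).
Proof.
elim: B => [|c B IH] //=.
case: ifP => _ //=.
by rewrite perm_sym -cat1s perm_catCA perm_cat2l perm_sym.
Qed.

Lemma perm_foldl w B : perm_eq (flatten (foldl ins B w)) (flatten B ++ w).
Proof.
elim: w B => [|x w IH] B /=; first by rewrite cats0.
apply: perm_trans (IH _) _.
rewrite perm_sym -cat1s perm_catCA catA perm_cat2r perm_sym; exact: perm_rinsert.
Qed.

Lemma perm_Rr w : perm_eq (flatten (rps_Rr w)) w.
Proof. exact: perm_foldl. Qed.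

Lemma Rr_ones a : foldl ins [::] (nseq a 1) = if a is 0 then [::] else [:: nseq a 1].
Proof.
elim: a => [|a IH] //.
rewrite -[a.+1]addn1 nseqD foldl_cat IH.
case: a {IH} => //= a.
congr [:: [:: 1 & _]]; by elim: a => //= a ->.
Qed.

Lemma C_lem k c B : foldl ins ((0 :: c) :: B) (nseq k 1) = (0 :: c) :: foldl ins B (nseq k 1).
Proof.
by elim: k B => [|k IH] B //=; rewrite /ins /= IH.
Qed.

Lemma Rr_one_zero a b :
  rps_Rr (nseq a 1 ++ 0 :: nseq b 1) = (0 :: nseq a 1) :: rps_Rr (nseq b 1).
Proof.
rewrite /rps_Rr foldl_cat Rr_ones /=.
have -> : rps_rinsert 0 (if a is 0 then [::] else [:: nseq a 1]) = [:: 0 :: nseq a 1].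
  by case: a.
by rewrite -/ins C_lem.
Qed.

Lemma size_Rr w : size (flatten (rps_Rr w)) = size w.
Proof. exact: perm_size (perm_Rr w). Qed.

Lemma all_ones s : all (fun x => x <= 1) s -> count_mem 0 s = 0 -> s = nseq (size s) 1.
Proof.
elim: s => [|x s IH] //= /andP[hx hs].
case: x hx => [|[|x]] //= _ h.
by rewrite -IH.
Qed.

Lemma one_zero s : all (fun x => x <= 1) s -> count_mem 0 s = 1 ->
  exists a b, s = nseq a 1 ++ 0 :: nseq b 1.
Proof.
elim: s => [|x s IH] //= /andP[hx hs].
case: x hx => [|[|x]] //= _ h.
- exists 0, (size s); rewrite /= -all_ones //; by move: h; rewrite ?eqxx add1n => -[].
- have [|a [b ->]] := IH hs; first by move: h; rewrite ?add0n. by exists a.+1, b.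
Qed.

Lemma key P X Y Q i j : size X <= i -> rps_Rr X = rps_Rr Y ->
  P ++ X ++ Q = 0 :: nseq i 1 ++ 0 :: nseq j 1 -> X = Y.
Proof.
move=> hsz hR hs.
have pXY : perm_eq X Y.
  have h1 := perm_Rr X; have h2 := perm_Rr Y; rewrite hR perm_sym in h1.
  exact: perm_trans h1 h2.
have allS : all (fun x => x <= 1) (0 :: nseq i 1 ++ 0 :: nseq j 1).
  by rewrite /= all_cat /= !all_nseq !orbT.
have allX : all (fun x => x <= 1) X.
  by move: allS; rewrite -hs !all_cat => /and3P[].
have allY : all (fun x => x <= 1) Y by rewrite -(perm_all _ pXY).
have cXY : count_mem 0 X = count_mem 0 Y by apply/permP.
have cX : count_mem 0 X <= 1.
  rewrite leqNgt; apply/negP => c2.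
  have cS : count_mem 0 (0 :: nseq i 1 ++ 0 :: nseq j 1) = 2.
    by rewrite /= count_cat /= !count_nseq.
  have cP : count_mem 0 P = 0.
    move: cS; rewrite -hs !count_cat. lia.
  have P0 : P = [::].
    by case: P hs cP => [|x P'] //= [-> _] /eqP; rewrite addn_eq0.
  move: hs; rewrite P0 /= => hs.
  have : X = take (size X) (0 :: nseq i 1 ++ 0 :: nseq j 1) by rewrite -hs take_size_cat.
  case: (size X) hsz => [|m] hm.
    by move=> h; move: c2; rewrite h.
  rewrite /= take_cat size_nseq hm take_nseq; last by apply: ltnW.
  move=> h; move: c2; rewrite h /= count_nseq. by [].
have [c0|c1'] : count_mem 0 X = 0 \/ count_mem 0 X = 1 by lia.
  rewrite (all_ones allX c0) (all_ones allY); last by rewrite -cXY.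
  by rewrite (perm_size pXY).
have [a [b eX]] := one_zero allX c1'.
have [c [d eY]] := one_zero allY (etrans (esym cXY) c1').
move: hR; rewrite eX eY !Rr_one_zero => -[/(congr1 size)] /=.
rewrite !size_nseq => -> /(congr1 (fun t => size (flatten t))).
by rewrite !size_Rr !size_nseq => ->.
Qed.

Section Main.
Variables (n : nat) (B : finType) (f : B -> seq 'I_n) (R : seq (seq B * seq B)).
Definition F (u : seq B) : seq nat := map val (word_hom f u).

Lemma F_cat u v : F (u ++ v) = F u ++ F v.
Proof. by rewrite /F /word_hom map_cat flatten_cat map_cat. Qed.

Variable L : nat.
Hypothesis HR : forall l r, (l, r) \in R ->
  [/\ rps_Rr (F l) = rps_Rr (F r), size (F l) <= L & size (F r) <= L].

Definition Big (s : seq nat) := exists i j, L <= i /\ s = 0 :: nseq i 1 ++ 0 :: nseq j 1.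

Lemma inv u v : cong_gen R u v -> Big (F u) \/ Big (F v) -> F u = F v.
Proof.
elim => {u v}.
- move=> p q l r lr; have [h1 h2 h3] := HR lr.
  rewrite !F_cat => -[] [i [j [hi hs]]].
  + by rewrite (key (leq_trans h2 hi) h1 hs).
  + by rewrite (key (leq_trans h3 hi) (esym h1) hs).
- by [].
- move=> u v _ IH h. by rewrite IH //; case: h; [right|left].
- move=> u v w _ IH1 _ IH2 [h|h].
  + have e := IH1 (or_introl h). rewrite e IH2 //; left; by rewrite -e.
  + have e := IH2 (or_intror h). rewrite -e; apply: IH1; right; by rewrite e.
Qed.
End Main.

Lemma perm1 (x : nat) s : perm_eq [:: x] s -> s = [:: x].
Proof.
move=> h; have := perm_size h; case: s h => [|y [|z s]] //= h _.
have : y \in [:: x] by rewrite (perm_mem h) mem_head.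
by rewrite inE => /eqP ->.
Qed.

Unset Implicit Arguments.

Theorem proposition3p25 (n : nat) : 2 <= n -> ~ rps_finitely_presented n.
Proof.
case: n => [|[|n']] // _ [B [f [R [Hsurj Hiff]]]].
pose L := \max_(x <- R) (size (F f x.1) + size (F f x.2)).
have HR : forall l r, (l, r) \in R ->
  [/\ rps_Rr (F f l) = rps_Rr (F f r), size (F f l) <= L & size (F f r) <= L].
  move=> l r lr.
  have hle := @leq_bigmax_seq _ R xpredT (fun x : seq B * seq B => size (F f x.1) + size (F f x.2)) (l, r) lr isT.
  split.
  - apply/(Hiff l r). by have := cg_base [::] [::] lr; rewrite /= !cats0.
  - apply: leq_trans hle; exact: leq_addr.
  - apply: leq_trans hle; exact: leq_addl.
have single : forall a : 'I_n'.+2, exists U, F f U = [:: val a].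
  move=> a; have [U hU] := Hsurj [:: a]; exists U.
  apply: perm1; have h1 := perm_Rr [:: val a]; have h2 := perm_Rr (F f U).
  rewrite /rps_equiv in hU; rewrite hU perm_sym in h1.
  exact: perm_trans h1 h2.
have [U0 h0] := single ord0.
have [U1 h1] := single (Ordinal (isT : 1 < n'.+2)).
have hk : forall k, F f (flatten (nseq k U1)) = nseq k 1.
  by elim=> [|k IH] //=; rewrite F_cat IH h1.
set k := L.+1.
pose u := U0 ++ flatten (nseq k U1) ++ U0.
pose v := U0 ++ U0 ++ flatten (nseq k U1).
have Fu : F f u = 0 :: nseq k 1 ++ 0 :: nseq 0 1 by rewrite /u F_cat (F_cat _ (flatten _)) hk h0.
have Fv : F f v = 0 :: 0 :: nseq k 1 by rewrite /v F_cat (F_cat _ U0) hk h0.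
have eq : rps_Rr (F f u) = rps_Rr (F f v).
  rewrite Fu Fv /rps_Rr /= -cat1s foldl_cat /=.
  rewrite -[[:: 0]]/(0 :: [::]) C_lem /=.
  by rewrite -[[:: 0; 0]]/(0 :: [:: 0]) C_lem.
have cg : cong_gen R u v by apply/Hiff.
have := inv HR cg (or_introl (ex_intro _ k (ex_intro _ 0 (conj (leqnSn L) Fu)))).
by rewrite Fu Fv.
Qed.
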